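(* For a set $\mathcal{R}$ of languages over $\Sigma$ let $\dot{\overline{\mathcal{R}}}=\{\Sigma^*\setminus L\mid L\in\mathcal{R}\}$ (point-wise complement). (1) There exists a rational set of regular languages $\mathcal{R}$ such that $\dot{\overline{\mathcal{R}}}$ is not a rational set of regular languages. (2) If $\mathcal{R}$ is a finite rational set of regular languages, then $\dot{\overline{\mathcal{R}}}$ is a finite rational set of regular languages. (3) In the finite case a modified language substitution is in general required: there exist an alphabet $\Delta$, a regular language substitution $\varphi:\Delta\to2^{\Sigma^*}$ and a regular $K\subseteq\Delta^+$ with $\mathcal{R}=(K,\varphi)$ finite, such that there is no regular $K'\subseteq\Delta^+$ with $\dot{\overline{\mathcal{R}}}=(K',\varphi)$.
   Context: Alphabets are nonempty finite sets. A regular language substitution $\varphi:\Delta\to2^{\Sigma^*}$ maps each symbol to a regular language over $\Sigma$, extended by $\varphi(\delta w)=\varphi(\delta)\varphi(w)$. A set $\mathcal{R}$ of regular languages over $\Sigma$ is a rational set of regular languages, written $\mathcal{R}=(K,\varphi)$, if there are an alphabet $\Delta$, a regular $K\subseteq\Delta^+$ and a regular language substitution $\varphi$ with $\mathcal{R}=\{\varphi(w)\mid w\in K\}$. *)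

(* Defs.v *)
From mathcomp Require Import all_boot.
From Stdlib Require Lists.List.
Set Implicit Arguments. Unset Strict Implicit. Unset Printing Implicit Defensive.

Definition lang (S : Type) := seq S -> Prop.

Definition regular (S : finType) (L : lang S) : Prop :=
  exists (Q : finType) (q0 : Q) (delta : Q -> S -> Q) (F : pred Q),
    forall w, L w <-> F (foldl delta q0 w).

Definition conc (S : Type) (L1 L2 : lang S) : lang S :=
  fun w => exists u v, w = u ++ v /\ L1 u /\ L2 v.
Definition eps_lang (S : Type) : lang S := fun w => w = [::].

Definition subst_word (D S : Type) (phi : D -> lang S) (w : seq D) : lang S :=
  foldr (fun d acc => conc (phi d) acc) (@eps_lang S) w.

Definition langset (S : Type) := lang S -> Prop.

(* Equality of sets of languages (languages compared by Leibniz equality). *)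
Definition langset_eq (S : Type) (R1 R2 : langset S) : Prop :=
  forall L, R1 L <-> R2 L.

Definition subst_image (D S : Type) (K : lang D) (phi : D -> lang S) : langset S :=
  fun L => exists w, K w /\ L = subst_word phi w.

Definition regular_subst (D S : finType) (phi : D -> lang S) : Prop :=
  forall d, regular (phi d).

Definition regular_plus (D : finType) (K : lang D) : Prop :=
  regular K /\ (forall w, K w -> w <> [::]).

Definition rational_set (S : finType) (R : langset S) : Prop :=
  exists (D : finType) (K : lang D) (phi : D -> lang S),
    0 < #|D| /\ regular_plus K /\ regular_subst phi /\
    langset_eq R (subst_image K phi).

Definition pw_compl (S : Type) (R : langset S) : langset S :=
  fun L => exists L0, R L0 /\ L = (fun w => ~ L0 w).

Definition finite_langset (S : Type) (R : langset S) : Prop :=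
  exists s : seq (lang S), forall L, R L <-> Stdlib.Lists.List.In L s.

(* Main.v *)
Require Import Defs.
From mathcomp Require Import all_boot zify.
From Stdlib Require Lists.List.
From Stdlib Require Import FunctionalExtensionality PropExtensionality ClassicalEpsilon.
Set Implicit Arguments. Unset Strict Implicit. Unset Printing Implicit Defensive.

Lemma regular_ext (S : finType) (L1 L2 : lang S) :
  regular L1 -> (forall w, L1 w <-> L2 w) -> regular L2.
Proof.
move=> [Q [q0 [d [F H]]]] E; exists Q, q0, d, F => w; rewrite -E; exact: H.
Qed.

Lemma regular_size (S : finType) (k : nat) (P : pred nat) :
  regular (fun w : seq S => P (minn (size w) k)).
Proof.
pose delta (q : 'I_k.+1) (_ : S) : 'I_k.+1 := inord (minn q.+1 k).
have H : forall w (q : 'I_k.+1), val (foldl delta q w) = minn (q + size w) k.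
  elim=> [|a w IH] q /=.
    have := ltn_ord q; lia.
  rewrite IH /delta inordK; last by rewrite ltnS geq_minr.
  have := ltn_ord q; lia.
exists ('I_k.+1 : finType), ord0, delta, (fun q : 'I_k.+1 => P q) => w.
by rewrite H.
Qed.

Lemma regular_single (D : finType) (p : pred D) :
  regular (fun w : seq D => exists x, p x /\ w = [:: x]).
Proof.
pose delta (q : option bool) (x : D) : option bool :=
  if q is None then Some (p x) else Some false.
have Hf : forall w, foldl delta (Some false) w = Some false.
  by elim=> //= a w IH.
exists (option bool : finType), None, delta, (fun q => q == Some true) => w.
case: w => [|a [|b w]] /=.
- by split => // [[x [_]]].
- split; first by move=> [x [Hx [->]]]; rewrite Hx.
  by move/eqP=> [Ha]; exists a; split; rewrite ?Ha.
- rewrite Hf; split => // [[x [_]]] //.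
Qed.

Lemma regular_compl (S : finType) (L : lang S) :
  regular L -> regular (fun w => ~ L w).
Proof.
move=> [Q [q0 [d [F H]]]]; exists Q, q0, d, (fun q => ~~ F q) => w.
rewrite H; split; first by move/negP.
by move/negP.
Qed.

Lemma regular_conc (S : finType) (A B : lang S) :
  regular A -> regular B -> regular (conc A B).
Proof.
move=> [Q1 [q1 [d1 [F1 HA]]]] [Q2 [q2 [d2 [F2 HB]]]].
pose init : (Q1 * {set Q2})%type := (q1, if F1 q1 then [set q2] else set0).
pose delta (st : (Q1 * {set Q2})%type) (a : S) : (Q1 * {set Q2})%type :=
  (d1 st.1 a, if F1 (d1 st.1 a) then q2 |: [set d2 x a | x in st.2]
              else [set d2 x a | x in st.2]).
have inv : forall w, (foldl delta init w).1 = foldl d1 q1 w /\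
   forall x, x \in (foldl delta init w).2 <->
     exists u v, w = u ++ v /\ F1 (foldl d1 q1 u) /\ x = foldl d2 q2 v.
  elim/last_ind => [|w a [IH1 IH2]].
    split => //= x; split.
      case: ifP => Hq; last by rewrite inE.
      by move/set1P=> ->; exists [::], [::].
    move=> [[|? ?] [[|? ?] [//= _ [Hq ->]]]].
    by rewrite Hq; apply/set1P.
  rewrite !foldl_rcons /=; split; first by rewrite IH1.
  move=> x; rewrite IH1; split.
    move=> Hx.
    have : (F1 (d1 (foldl d1 q1 w) a) /\ x = q2) \/
           x \in [set d2 y a | y in (foldl delta init w).2].
      move: Hx; case: ifP => Hq; last by right.
      by rewrite in_setU1 => /orP [/eqP ->|]; [left|right].
    case=> [[Hq ->]|].
      by exists (rcons w a), [::]; rewrite cats0 foldl_rcons.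
    case/imsetP=> y /IH2 [u [v [-> [Hu ->]]]] ->.
    by exists u, (rcons v a); rewrite rcons_cat foldl_rcons.
  move=> [u [v [E [Hu ->]]]].
  case/lastP: v E => [|v b] E.
    rewrite cats0 in E; subst u; rewrite foldl_rcons in Hu.
    by rewrite Hu /= in_setU1 eqxx.
  rewrite -rcons_cat in E.
  have [Ew Eb] : w = u ++ v /\ a = b.
    by have := rcons_inj E => [[-> ->]].
  subst a.
  have Hin : foldl d2 q2 (rcons v b) \in [set d2 y b | y in (foldl delta init w).2].
    rewrite foldl_rcons; apply: (imset_f (fun y => d2 y b)).
    by apply/IH2; exists u, v.
  by case: ifP => _; rewrite ?in_setU1 Hin ?orbT.
exists (Q1 * {set Q2})%type, init, delta, (fun st : (Q1 * {set Q2})%type => [exists x in st.2, F2 x]) => w.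
split.
  move=> [u [v [Ew [Ha Hb]]]]; apply/existsP; exists (foldl d2 q2 v).
  apply/andP; split; last by apply/HB.
  by apply/(proj2 (inv w)); exists u, v; split => //; split => //; apply/HA.
move/existsP=> [x /andP [Hx Hf]].
move/(proj2 (inv w) x): Hx => [u [v [-> [Hu Ex]]]].
exists u, v; split => //; split; first by apply/HA.
by apply/HB; rewrite -Ex.
Qed.

Lemma regular_eps (S : finType) : regular (@eps_lang S).
Proof.
apply: regular_ext (regular_size S 1 (fun n => n == 0)) _ => w /=.
rewrite /eps_lang; case: w => //=; split => //.
Qed.

Lemma regular_subst_word (D S : finType) (phi : D -> lang S) w :
  regular_subst phi -> regular (subst_word phi w).
Proof.
move=> Hphi; elim: w => [|d w IH] /=; first exact: regular_eps.
exact: regular_conc.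
Qed.

Lemma sw_eps_sub (D S : finType) (phi : D -> lang S) w :
  subst_word phi w [::] -> forall d, d \in w -> forall v, phi d v -> subst_word phi w v.
Proof.
elim: w => [|e w IH] //= [x [y [Exy [Hx Hy]]]] d.
have [Ex Ey] : x = [::] /\ y = [::] by case: x Exy {Hx} => //; case: y {Hy}.
subst x y.
rewrite in_cons => /orP [/eqP ->|Hd] v Hv.
  by exists v, [::]; rewrite cats0.
by exists [::], v; split => //; split => //; exact: (IH Hy d Hd).
Qed.

Lemma sw_short (D S : finType) (phi : D -> lang S) w u :
  subst_word phi w u -> u <> [::] ->
  exists d, d \in w /\ exists v, phi d v /\ v <> [::] /\ size v <= size u.
Proof.
elim: w u => [|e w IH] u /=; first by move=> ->.
move=> [x [y [-> [Hx Hy]]]] Hu.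
case: x Hx Hu => [|a x] Hx Hu.
  have [d [Hd Hv]] := IH y Hy Hu.
  by exists d; split => //; rewrite in_cons Hd orbT.
exists e; split; first by rewrite in_cons eqxx.
by exists (a :: x); split => //; split => //; rewrite size_cat leq_addr.
Qed.

Definition phi1 (b : bool) : lang unit :=
  if b then (fun w => size w = 1) else (fun w => size w <= 1).

Lemma sw_nseq m u : subst_word phi1 (nseq m false) u <-> size u <= m.
Proof.
elim: m u => [|m IH] u /=.
  by rewrite leqn0 size_eq0; split; [move=> -> | move/eqP].
split.
  move=> [x [y [-> [Hx /IH Hy]]]]; rewrite size_cat; move: Hx; rewrite /phi1; lia.
case: u => [|a u] Hu.
  by exists [::], [::]; split => //; split => //; apply/IH.
by exists [:: a], u; split => //; split => //; apply/IH.
Qed.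

Lemma sw_main m u : subst_word phi1 (true :: nseq m false) u <-> 0 < size u <= m.+1.
Proof.
split.
  move=> [x [y [-> [Hx /sw_nseq Hy]]]]; rewrite size_cat; move: Hx; rewrite /phi1; lia.
case: u => [|a u] // Hu.
by exists [:: a], u; split => //; split => //; apply/sw_nseq.
Qed.

Definition K1 (w : seq bool) : Prop := exists m, w = true :: nseq m false.

Lemma K1_reg : regular_plus K1.
Proof.
split; last by move=> w [m ->].
pose delta (q : option bool) (b : bool) : option bool :=
  match q with None => Some b | Some true => Some (~~ b) | Some false => Some false end.
have Hf : forall w, foldl delta (Some false) w = Some false by elim.
have Ht : forall w, foldl delta (Some true) w = Some true <-> exists m, w = nseq m false.
  elim=> [|[] w IH] /=; first by split => // _; exists 0.
    by rewrite Hf; split => // [[[|m]]].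
  rewrite IH; split; first by move=> [m ->]; exists m.+1.
  by move=> [[|m] //= [->]]; exists m.
exists (option bool : finType), None, delta, (fun q => q == Some true) => w.
case: w => [|[] w] /=.
- by split => // [[m]].
- by rewrite /K1; split; [move=> [m [->]]; apply/eqP/Ht; exists m
                       | move/eqP/Ht=> [m ->]; exists m].
- by rewrite Hf; split => // [[m]].
Qed.

Lemma part1 : exists (S : finType) (R : langset S),
      0 < #|S| /\ rational_set R /\ ~ rational_set (pw_compl R).
Proof.
exists unit, (subst_image K1 phi1).
split; first by rewrite card_unit.
split.
  exists bool, K1, phi1; split; first by rewrite card_bool.
  split; first exact: K1_reg.
  split; last by [].
  case=> /=.
    apply: regular_ext (regular_size unit 2 (fun n => n == 1)) _ => w.
    by split; [move/eqP; case: w => [|? [|? ?]] | move=> ->].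
  apply: regular_ext (regular_size unit 2 (fun n => n <= 1)) _ => w.
  by case: w => [|? [|? ?]].
move=> [D [K [phi [_ [[_ _] [_ HR]]]]]].
pose P m d := (exists v, phi d v /\ size v = m.+2) /\
              (forall v, phi d v -> v <> [::] -> m.+2 <= size v).
have HP : forall m, exists d, P m d.
  move=> m.
  pose L := fun u => ~ subst_word phi1 (true :: nseq m false) u.
  have : pw_compl (subst_image K1 phi1) L.
    by exists (subst_word phi1 (true :: nseq m false)); split => //; exists (true :: nseq m false); split => //; exists m.
  move/HR=> [w [_ Ew]].
  have HL : forall u, subst_word phi w u <-> ~ (0 < size u <= m.+1).
    by move=> u; rewrite -Ew /L sw_main.
  have Hnil : subst_word phi w [::] by apply/HL.
  have Hu : subst_word phi w (nseq m.+2 tt) by apply/HL; rewrite size_nseq; lia.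
  have [d [Hd [v [Hv [Hv0 Hvs]]]]] := sw_short Hu (fun E => ltac:(discriminate E)).
  have Hlo : forall v, phi d v -> v <> [::] -> m.+2 <= size v.
    move=> v' Hv' Hv'0; have /HL := sw_eps_sub Hnil Hd Hv'.
    have : 0 < size v' by case: v' Hv' Hv'0.
    lia.
  exists d; split => //; exists v; split => //.
  have := Hlo v Hv Hv0; rewrite size_nseq in Hvs; lia.
pose f (i : 'I_(#|D|.+1)) : D := proj1_sig (constructive_indefinite_description _ (HP i)).
have Hinj : injective f.
  move=> i j; rewrite /f.
  case: constructive_indefinite_description => d1 [[v1 [H1 E1]] L1].
  case: constructive_indefinite_description => d2 [[v2 [H2 E2]] L2] /= E.
  subst d2; apply: ord_inj.
  have A := L1 v2 H2; have B := L2 v1 H1.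
  have : v2 <> [::] by move=> E0; rewrite E0 in E2.
  have : v1 <> [::] by move=> E0; rewrite E0 in E1.
  move=> n1 n2; have := A n2; have := B n1; move=> h1 h2; rewrite E1 !ltnS in h1; rewrite E2 !ltnS in h2; by apply/eqP; rewrite eqn_leq h1 h2.
have := leq_card f Hinj; rewrite card_ord; lia.
Qed.

Lemma conc_eps (S : Type) (A : lang S) : conc A (@eps_lang S) = A.
Proof.
apply: functional_extensionality => w; apply: propositional_extensionality.
split; first by move=> [u [v [-> [Hu ->]]]]; rewrite cats0.
by move=> Hw; exists w, [::]; rewrite cats0.
Qed.

Lemma part2 : forall (S : finType) (R : langset S),
      0 < #|S| -> rational_set R -> finite_langset R ->
      rational_set (pw_compl R) /\ finite_langset (pw_compl R).
Proof.
move=> S R _ [D [K [phi [_ [_ [Hphi HR]]]]]] [s Hs].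
have Hreg : forall L, R L -> regular L.
  move=> L /HR [w [_ ->]]; exact: regular_subst_word.
pose def : lang S := fun _ => False.
pose n := length s.
have Hnth : forall i, regular (List.nth i s def).
  move=> i; case: (ltnP i n) => Hi.
    apply: Hreg; apply/Hs; apply: List.nth_In; apply/ltP; exact: Hi.
  rewrite List.nth_overflow; last by apply/leP.
  apply: regular_ext (regular_size S 0 (fun _ => false)) _ => w //.
split.
  pose phi' : 'I_n.+1 -> lang S := fun i w => ~ List.nth i s def w.
  exists ('I_n.+1 : finType), (fun w => exists i : 'I_n.+1, (i < n) && true /\ w = [:: i]), phi'.
  split; first by rewrite card_ord.
  split.
    split.
      apply: regular_ext (regular_single (fun i : 'I_n.+1 => (i < n) && true)) _ => w.
      done.
    by move=> w [i [_ ->]].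
  split; first by move=> i; apply: regular_compl.
  move=> L; split.
    move=> [L0 [/Hs HL0 ->]].
    have [i [Hi Ei]] := List.In_nth s L0 def HL0.
    have Hi' : i < n.+1 by apply: leqW; apply/ltP.
    exists [:: Ordinal Hi']; split.
      by exists (Ordinal Hi'); split => //=; rewrite andbT; apply/ltP.
    by rewrite /= conc_eps /phi' /= -Ei.
  move=> [w [[i [Hi ->]] ->]].
  rewrite /= conc_eps; exists (List.nth i s def); split => //.
  apply/Hs; apply: List.nth_In; apply/ltP; by move: Hi; rewrite andbT.
exists (List.map (fun L w => ~ L w) s) => L; split.
  move=> [L0 [/Hs HL0 ->]]; exact: List.in_map.
move/List.in_map_iff=> [L0 [<- HL0]]; exists L0; split => //; exact/Hs.
Qed.

Lemma subst_word_nil (D S : Type) (phi : D -> lang S) w : subst_word phi w [::] \/ True.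
Proof. by right. Qed.

Lemma part3 : (exists (S D : finType) (phi : D -> lang S) (K : lang D),
      0 < #|S| /\ 0 < #|D| /\ regular_subst phi /\ regular_plus K /\
      finite_langset (subst_image K phi) /\
      ~ (exists K' : lang D, regular_plus K' /\
           langset_eq (pw_compl (subst_image K phi)) (subst_image K' phi))).
Proof.
pose phi : unit -> lang unit := fun _ _ => True.
have Hnil : forall w, subst_word phi w [::].
  elim=> [|d w IH] //=; by exists [::], [::].
exists unit, unit, phi, (fun w => w = [:: tt]).
split; first by rewrite card_unit.
split; first by rewrite card_unit.
split.
  move=> d; apply: regular_ext (regular_size unit 0 (fun _ => true)) _ => w //.
split.
  split; last by move=> w ->.
  apply: regular_ext (regular_size unit 2 (fun n => n == 1)) _ => w /=.
  case: w => [|[] [|[] w]] //=; split => //.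
split.
  exists [:: subst_word phi [:: tt]] => L; split.
    by move=> [w [-> ->]]; left.
  by move=> [<-|[]]; exists [:: tt].
move=> [K' [_ HK]].
have : pw_compl (subst_image (fun w => w = [:: tt]) phi) (fun w => ~ subst_word phi [:: tt] w).
  by exists (subst_word phi [:: tt]); split => //; exists [:: tt].
move/HK=> [w [_ E]].
have := Hnil w; rewrite -E; apply; exact: Hnil.
Qed.

Theorem proposition4 :
  (* (1) *)
  (exists (S : finType) (R : langset S),
      0 < #|S| /\ rational_set R /\ ~ rational_set (pw_compl R)) /\
  (* (2) *)
  (forall (S : finType) (R : langset S),
      0 < #|S| -> rational_set R -> finite_langset R ->
      rational_set (pw_compl R) /\ finite_langset (pw_compl R)) /\
  (* (3) *)
  (exists (S D : finType) (phi : D -> lang S) (K : lang D),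
      0 < #|S| /\ 0 < #|D| /\ regular_subst phi /\ regular_plus K /\
      finite_langset (subst_image K phi) /\
      ~ (exists K' : lang D, regular_plus K' /\
           langset_eq (pw_compl (subst_image K phi)) (subst_image K' phi))).
Proof.
split; first exact: part1.
split; first exact: part2.
exact: part3.
Qed.
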